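(* There exists a polynomial $p$ such that for every sufficiently large natural number $n$ the following holds. Let $\alpha$ be an integer with $\alpha > 7 \log n + 6$, and let $(x_1, \ldots, x_t)$ be a tuple of strings in $\{0,1\}^n$ that is mutually $\alpha$-independent, i.e. $C(x_{\pi(1)} x_{\pi(2)} \cdots x_{\pi(t)}) \geq C(x_1) + \cdots + C(x_t) - \alpha$ for every permutation $\pi$ of $\{1,\ldots,t\}$. Then $t \leq p(n)\, 2^{\alpha}$.
   Context: $C(x)$ denotes the plain Kolmogorov complexity of the binary string $x$ with respect to a fixed universal Turing machine; juxtaposition of strings denotes concatenation. Logarithms are base $2$. *)

(* Defs.v *)
From Stdlib Require Import Reals ClassicalEpsilon.
From mathcomp Require Import all_boot all_order all_algebra all_fingroup.
From mathcomp Require Import Rstruct.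

Set Implicit Arguments.
Unset Strict Implicit.
Unset Printing Implicit Defensive.

Inductive code : Type :=
| CZero
| CSucc
| CProj (i : nat)
| CComp (f : code) (gs : list code)
| CPrim (f g : code)
| CMu (f : code).

Fixpoint eval (k : nat) (c : code) (v : list nat) {struct k} : option nat :=
  match k with
  | 0 => None
  | S k' =>
    match c with
    | CZero => Some 0
    | CSucc => Some (S (head 0 v))
    | CProj i => Some (nth 0 v i)
    | CComp f gs =>
        let fix evs (gs : list code) : option (list nat) :=
          match gs with
          | nil => Some nil
          | g :: gs' =>
              match eval k' g v, evs gs' with
              | Some a, Some w => Some (a :: w)
              | _, _ => None
              end
          end in
        match evs gs with
        | Some w => eval k' f w
        | None => None
        end
    | CPrim f g =>
        let rest := behead v in
        let fix pr (n : nat) : option nat :=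
          match n with
          | 0 => eval k' f rest
          | S m => match pr m with
                   | Some a => eval k' g (m :: a :: rest)
                   | None => None
                   end
          end in
        pr (head 0 v)
    | CMu f =>
        let fix mu (j m : nat) : option nat :=
          match j with
          | 0 => None
          | S j' => match eval k' f (m :: v) with
                    | Some 0 => Some m
                    | Some _ => mu j' (S m)
                    | None => None
                    end
          end in
        mu k' 0
    end
  end.

(* Bijective base-2 numbering of binary strings: seq bool <-> nat. *)
Fixpoint bits_to_nat (s : seq bool) : nat :=
  match s with
  | [::] => 0
  | b :: s' => (bits_to_nat s').*2 + (if b then 2 else 1)
  end.

(* The partial computable function with code [e], viewed as a map on binary
   strings: [desc e p x] means that on input (string) p it halts with output
   (string) x. *)
Definition desc (e : code) (p x : seq bool) : Prop :=
  exists k, eval k e [:: bits_to_nat p] = Some (bits_to_nat x).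

(* A universal (additively optimal) machine [u]: it simulates every partial
   computable function with at most a constant additive overhead in the
   length of descriptions (invariance theorem). *)
Definition universal (u : code) : Prop :=
  forall e : code, exists c : nat, forall p x : seq bool,
    desc e p x -> exists q : seq bool, desc u q x /\ size q <= size p + c.

(* Plain Kolmogorov complexity of x with respect to u: the length of a
   shortest description of x.  (Defined via classical choice; for a
   universal u a description always exists.) *)
Definition KC (u : code) (x : seq bool) : nat :=
  epsilon (inhabits 0%N)
    (fun m => (exists p, size p = m /\ desc u p x) /\
              (forall p, desc u p x -> m <= size p)).

Definition concat_perm (t : nat) (xs : 'I_t -> seq bool) (pi : 'S_t)
  : seq bool := flatten [seq xs (pi i) | i <- enum 'I_t].

Definition mutually_indep (u : code) (alpha : int) (t : nat)
  (xs : 'I_t -> seq bool) : Prop :=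
  forall pi : 'S_t,
    ((KC u (concat_perm xs pi))%:Z >= (\sum_(i < t) (KC u (xs i))%:Z) - alpha)%R.

(* Main.v *)
Require Import Defs.
From Stdlib Require Import Reals.
From mathcomp Require Import all_boot all_order all_algebra all_fingroup.
From mathcomp Require Import Rstruct.
Import GRing.Theory Num.Theory.
From Stdlib Require Import Lia Classical ClassicalEpsilon.
From mathcomp Require Import zify ring.
Import Order.TTheory.
Set Implicit Arguments. Unset Strict Implicit.

Notation Comp := CComp.
Notation bval := bits_to_nat.

Lemma evs_mono v gs w
  (E E' : code -> seq nat -> nat -> option nat)
  (HE : forall c v a, E c v 0 = Some a -> E' c v 0 = Some a) :
  (fix evs (gs0 : seq code) : option (seq nat) :=
     match gs0 with
     | [::] => Some [::]
     | g :: gs' => match E g v 0, evs gs' with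
                   | Some a, Some w => Some (a :: w) | _, _ => None end
     end) gs = Some w ->
  (fix evs (gs0 : seq code) : option (seq nat) :=
     match gs0 with
     | [::] => Some [::]
     | g :: gs' => match E' g v 0, evs gs' with
                   | Some a, Some w => Some (a :: w) | _, _ => None end
     end) gs = Some w.
Proof.
elim: gs w => [//|g0 gs0 IHg] w.
case E1: (E g0 v 0) => [a0|] //.
set X := (fix evs (gs0 : seq code) : option (seq nat) := _) gs0.
case E2: X => [w0|] // .
by rewrite (HE _ _ _ E1) (IHg _ E2).
Qed.
Lemma pr_mono f g rest n a
  (E E' : code -> seq nat -> nat -> option nat)
  (HE : forall c v a, E c v 0 = Some a -> E' c v 0 = Some a) :
  (fix pr (n : nat) : option nat :=
          match n with
          | 0 => E f rest 0
          | m.+1 =>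
              match pr m with
              | Some a => E g [:: m, a & rest] 0
              | None => None
              end
          end) n = Some a ->
  (fix pr (n : nat) : option nat :=
          match n with
          | 0 => E' f rest 0
          | m.+1 =>
              match pr m with
              | Some a => E' g [:: m, a & rest] 0
              | None => None
              end
          end) n = Some a.
Proof.
elim: n a => [|m IHm] a; first exact: (HE _ _ _).
set X := (fix pr (n : nat) : option nat := _) m.
destruct X as [b|] eqn:Eb; last by [].
move=> Hb. have := IHm _ Eb. cbv beta => ->. exact: (HE _ _ _).
Qed.

Lemma mu_mono f v j m a
  (E E' : code -> seq nat -> nat -> option nat)
  (HE : forall c v a, E c v 0 = Some a -> E' c v 0 = Some a) :
  (fix mu (j m : nat) {struct j} : option nat :=
          match j with
          | 0 => None
          | j'.+1 =>
              match E f (m :: v) 0 with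
              | Some 0 => Some m
              | Some _.+1 => mu j' m.+1
              | None => None
              end
          end) j m = Some a ->
  (fix mu (j m : nat) {struct j} : option nat :=
          match j with
          | 0 => None
          | j'.+1 =>
              match E' f (m :: v) 0 with
              | Some 0 => Some m
              | Some _.+1 => mu j' m.+1
              | None => None
              end
          end) j.+1 m = Some a.
Proof.
elim: j m => [//|j IHj] m.
destruct (E f (m :: v) 0) as [[|b]|] eqn:Ef; last by [].
- move=> H. have := HE _ _ _ Ef. cbv beta => ->. exact: H.
- move=> H. have := HE _ _ _ Ef. cbv beta => ->. exact: IHj.
Qed.

Lemma eval_mono k c v a : eval k c v = Some a -> eval k.+1 c v = Some a.
Proof.
elim: k c v a => [//|k IH] c v a.
case: c => [||i|f gs|f g|f] //.
- rewrite [eval k.+1 _ _]/= [eval k.+2 _ _]/=.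
  have := fun w => @evs_mono v gs w (fun c v _ => eval k c v) (fun c v _ => eval k.+1 c v) (fun c v a => @IH c v a).
  move=> H.
  destruct ((fix evs (gs0 : seq code) : option (seq nat) :=
     match gs0 with
     | [::] => Some [::]
     | g :: gs' => match eval k g v, evs gs' with
                   | Some a, Some w => Some (a :: w) | _, _ => None end
     end) gs) as [w|] eqn:Ew; last by [].
  have := H _ erefl; cbv beta => ->; apply: IH.
- rewrite [eval k.+1 _ _]/= [eval k.+2 _ _]/=.
  exact: (@pr_mono _ _ _ _ _ (fun c v _ => eval k c v) (fun c v _ => eval k.+1 c v) (fun c v a => @IH c v a)).
- rewrite [eval k.+1 _ _]/= [eval k.+2 _ _]/=.
  exact: (@mu_mono _ _ _ _ _ (fun c v _ => eval k c v) (fun c v _ => eval k.+1 c v) (fun c v a => @IH c v a)).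
Qed.

Lemma eval_monoLe k k' c v a : k <= k' -> eval k c v = Some a -> eval k' c v = Some a.
Proof.
move=> /subnK <-; elim: (k' - k) => [//|d IHd] H.
by rewrite addSn; apply: eval_mono; apply: IHd.
Qed.

Definition ev c v a := exists k, eval k c v = Some a.

Lemma ev_det c v a b : ev c v a -> ev c v b -> a = b.
Proof.
move=> [k1 H1] [k2 H2].
have := eval_monoLe (leq_maxl k1 k2) H1.
by rewrite (eval_monoLe (leq_maxr k1 k2) H2) => -[].
Qed.

Lemma ev_zero v : ev CZero v 0. Proof. by exists 1. Qed.
Lemma ev_succ v : ev CSucc v (head 0 v).+1. Proof. by exists 1. Qed.
Lemma ev_proj i v : ev (CProj i) v (nth 0 v i). Proof. by exists 1. Qed.

Fixpoint evall v gs ws : Prop :=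
  match gs, ws with
  | [::], [::] => True
  | g :: gs, w :: ws => ev g v w /\ evall v gs ws
  | _, _ => False
  end.

Lemma ev_comp f gs v ws b : evall v gs ws -> ev f ws b -> ev (CComp f gs) v b.
Proof.
move=> Hall [kf Hf].
have [K [HK1 HK2]] : exists K, kf <= K /\
  (fix evs (gs0 : seq code) : option (seq nat) :=
     match gs0 with
     | [::] => Some [::]
     | g :: gs' => match eval K g v, evs gs' with
                   | Some a, Some w => Some (a :: w) | _, _ => None end
     end) gs = Some ws.
  elim: gs ws Hall kf {Hf} => [|g gs IH] [|w ws] //=.
    by move=> _ kf; exists kf.
  move=> [[kg Hg] Hr] kf.
  have [K [HK1 HK2]] := IH _ Hr (maxn kf kg).
  exists K; split; first exact: leq_trans (leq_maxl _ _) HK1.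
  rewrite (eval_monoLe (leq_trans (leq_maxr _ _) HK1) Hg).
  by rewrite HK2.
exists K.+1 => /=. rewrite HK2. exact: eval_monoLe HK1 Hf.
Qed.

Lemma ev_comp1 f g v w b : ev g v w -> ev f [:: w] b -> ev (CComp f [:: g]) v b.
Proof. by move=> H1; apply: ev_comp. Qed.
Lemma ev_comp2 f g1 g2 v w1 w2 b : ev g1 v w1 -> ev g2 v w2 -> ev f [:: w1; w2] b ->
  ev (CComp f [:: g1; g2]) v b.
Proof. by move=> H1 H2; apply: ev_comp. Qed.
Lemma ev_comp3 f g1 g2 g3 v w1 w2 w3 b : ev g1 v w1 -> ev g2 v w2 -> ev g3 v w3 ->
  ev f [:: w1; w2; w3] b -> ev (CComp f [:: g1; g2; g3]) v b.
Proof. by move=> H1 H2 H3; apply: ev_comp. Qed.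
Lemma ev_comp4 f g1 g2 g3 g4 v w1 w2 w3 w4 b : ev g1 v w1 -> ev g2 v w2 -> ev g3 v w3 ->
  ev g4 v w4 -> ev f [:: w1; w2; w3; w4] b -> ev (CComp f [:: g1; g2; g3; g4]) v b.
Proof. by move=> H1 H2 H3 H4; apply: ev_comp. Qed.

Lemma ev_prim f g n rest (s : nat -> nat) :
  ev f rest (s 0) -> (forall m, m < n -> ev g [:: m, s m & rest] (s m.+1)) ->
  ev (CPrim f g) (n :: rest) (s n).
Proof.
move=> Hf Hg.
suff [K HK] : exists K,
  (fix pr (n : nat) : option nat :=
          match n with
          | 0 => eval K f rest
          | m.+1 =>
              match pr m with
              | Some a => eval K g [:: m, a & rest]
              | None => None
              end
          end) n = Some (s n).
  by exists K.+1.
have : forall K', (fun _ => True) K' -> True by [].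
move=> _.
suff H : forall n0, n0 <= n -> exists K, forall K', K <= K' ->
  (fix pr (n : nat) : option nat :=
          match n with
          | 0 => eval K' f rest
          | m.+1 =>
              match pr m with
              | Some a => eval K' g [:: m, a & rest]
              | None => None
              end
          end) n0 = Some (s n0).
  by have [K HK] := H n (leqnn n); exists K; apply: HK.
elim=> [|m IHm] Hm.
  case: Hf => kf Hf; exists kf => K' HK'; exact: eval_monoLe HK' Hf.
have [K1 HK1] := IHm (ltnW Hm).
have [kg Hkg] := Hg m Hm.
exists (maxn K1 kg) => K' HK'.
rewrite (HK1 K' (leq_trans (leq_maxl _ _) HK')).
exact: eval_monoLe (leq_trans (leq_maxr _ _) HK') Hkg.
Qed.


Definition cpred := CPrim CZero (CProj 0).
Lemma ev_pred x r : ev cpred (x :: r) x.-1.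
Proof. apply: (@ev_prim _ _ _ _ (fun m => m.-1)); first exact: ev_zero.
by move=> m _; apply: ev_proj. Qed.

Definition cadd := CPrim (CProj 0) (Comp CSucc [:: CProj 1]).
Lemma ev_add x y : ev cadd [:: x; y] (x + y).
Proof. apply: (@ev_prim _ _ _ _ (fun m => m + y)); first exact: ev_proj.
move=> m _; apply: ev_comp1; first exact: ev_proj. exact: ev_succ. Qed.

Definition csub0 := CPrim (CProj 0) (Comp cpred [:: CProj 1]).
Definition csub := Comp csub0 [:: CProj 1; CProj 0].
Lemma ev_sub x y : ev csub [:: x; y] (x - y).
Proof.
apply: ev_comp2; [exact: ev_proj| exact: ev_proj|].
apply: (@ev_prim _ _ _ _ (fun m => x - m)); first by rewrite subn0; exact: ev_proj.
move=> m _; apply: ev_comp1; first exact: ev_proj.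
by rewrite subnS; apply: ev_pred. Qed.

Definition cmul := CPrim CZero (Comp cadd [:: CProj 1; CProj 2]).
Lemma ev_mul x y : ev cmul [:: x; y] (x * y).
Proof. apply: (@ev_prim _ _ _ _ (fun m => m * y)); first exact: ev_zero.
move=> m _; apply: ev_comp2; [exact: ev_proj| exact: ev_proj|].
by rewrite mulSn addnC; apply: ev_add. Qed.

Definition cone := Comp CSucc [:: CZero].
Lemma ev_one v : ev cone v 1.
Proof. apply: ev_comp1; [exact: ev_zero| exact: ev_succ]. Qed.

Definition cpow2 := CPrim cone (Comp cadd [:: CProj 1; CProj 1]).
Lemma ev_pow2 x r : ev cpow2 (x :: r) (2 ^ x).
Proof. apply: (@ev_prim _ _ _ _ (fun m => 2 ^ m)); first exact: ev_one.
move=> m _; apply: ev_comp2; [exact: ev_proj| exact: ev_proj|].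
by rewrite expnS mul2n -addnn; apply: ev_add. Qed.

Definition ciszero := CPrim cone CZero.
Lemma ev_iszero x r : ev ciszero (x :: r) (x == 0).
Proof. apply: (@ev_prim _ _ _ _ (fun m => nat_of_bool (m == 0))); first exact: ev_one.
by move=> m _; apply: ev_zero. Qed.

Definition codd := CPrim CZero (Comp ciszero [:: CProj 1]).
Lemma ev_odd x r : ev codd (x :: r) (odd x).
Proof. apply: (@ev_prim _ _ _ _ (fun m => nat_of_bool (odd m))); first exact: ev_zero.
move=> m _; apply: ev_comp1; first exact: ev_proj.
by rewrite /=; case: (odd m); [exact: (ev_iszero 1 [::])|exact: (ev_iszero 0 [::])]. Qed.

Definition cdiv2 := CPrim CZero (Comp cadd [:: CProj 1; Comp codd [:: CProj 0]]).
Lemma ev_div2 x r : ev cdiv2 (x :: r) (x./2).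
Proof. apply: (@ev_prim _ _ _ _ (fun m => m./2)); first exact: ev_zero.
move=> m _; apply: ev_comp2; [exact: ev_proj| apply: ev_comp1; [exact: ev_proj| exact: ev_odd]|].
by rewrite /= uphalf_half addnC; apply: ev_add. Qed.

Definition ceq := Comp ciszero [:: Comp cadd [:: csub; Comp csub [:: CProj 1; CProj 0]]].
Lemma ev_eq x y : ev ceq [:: x; y] (x == y).
Proof.
apply: ev_comp1; last first.
  have -> : (x == y) = ((x - y) + (y - x) == 0).
    by rewrite addn_eq0 !subn_eq0 eqn_leq.
  exact: ev_iszero.
apply: ev_comp2; [exact: ev_sub| |exact: ev_add].
apply: ev_comp2; [exact: ev_proj| exact: ev_proj| exact: ev_sub].
Qed.

Definition tailn x := x.-1./2.
Definition ctail := Comp cdiv2 [:: Comp cpred [:: CProj 0]].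
Lemma ev_tail x r : ev ctail (x :: r) (tailn x).
Proof. apply: ev_comp1; [apply: ev_comp1; [exact: ev_proj| exact: ev_pred]| exact: ev_div2]. Qed.

Definition dropn j x := iter j tailn x.
Definition cdrop := CPrim (CProj 0) (Comp ctail [:: CProj 1]).
Lemma ev_drop j x : ev cdrop [:: j; x] (dropn j x).
Proof. apply: (@ev_prim _ _ _ _ (fun m => dropn m x)); first exact: ev_proj.
move=> m _; apply: ev_comp1; first exact: ev_proj. exact: ev_tail. Qed.

Definition taken j x := x - 2 ^ j * dropn j x.
Definition ctake := Comp csub [:: CProj 1; Comp cmul [:: Comp cpow2 [:: CProj 0]; cdrop]].
Lemma ev_take j x : ev ctake [:: j; x] (taken j x).
Proof.
apply: ev_comp2; [exact: ev_proj| |exact: ev_sub].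
apply: ev_comp2; [apply: ev_comp1; [exact: ev_proj| exact: ev_pow2]|exact: ev_drop|exact: ev_mul].
Qed.

Definition leadF x := \sum_(j < x) (taken j.+1 x == (2 ^ j.+1).-1).
Definition cleadF0 := CPrim CZero (Comp cadd [:: CProj 1; Comp ceq
   [:: Comp ctake [:: Comp CSucc [:: CProj 0]; CProj 2]; Comp cpred [:: Comp cpow2 [:: Comp CSucc [:: CProj 0]]]]]).
Definition cleadF := Comp cleadF0 [:: CProj 0; CProj 0].
Lemma ev_leadF x : ev cleadF [:: x] (leadF x).
Proof.
apply: ev_comp2; [exact: ev_proj|exact: ev_proj|].
apply: (@ev_prim _ _ _ _ (fun m => \sum_(j < m) (taken j.+1 x == (2 ^ j.+1).-1))).
  by rewrite big_ord0; exact: ev_zero.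
move=> m _; apply: ev_comp2; [exact: ev_proj| |by rewrite big_ord_recr /=; apply: ev_add].
apply: ev_comp2; last exact: ev_eq.
  apply: ev_comp2; [apply: ev_comp1; [exact: ev_proj|exact: ev_succ]|exact: ev_proj|exact: ev_take].
apply: ev_comp1; last exact: ev_pred.
apply: ev_comp1; [apply: ev_comp1; [exact: ev_proj|exact: ev_succ]|exact: ev_pow2].
Qed.

Definition nextn W Wp j R := dropn ((taken W R - Wp) * j./2) (dropn W R).
Definition cnext := Comp cdrop [:: Comp cmul [:: Comp csub [:: Comp ctake [:: CProj 3; CProj 1]; CProj 4];
                                                 Comp cdiv2 [:: CProj 0]];
                                   Comp cdrop [:: CProj 3; CProj 1]].
Lemma ev_next j R B W Wp : ev cnext [:: j; R; B; W; Wp] (nextn W Wp j R).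
Proof.
apply: ev_comp2; last exact: ev_drop.
- apply: ev_comp2; last exact: ev_mul.
  + apply: ev_comp2; last exact: ev_sub.
    * apply: ev_comp2; [exact: ev_proj|exact: ev_proj|exact: ev_take].
    * exact: ev_proj.
  + apply: ev_comp1; [exact: ev_proj|exact: ev_div2].
- apply: ev_comp2; [exact: ev_proj|exact: ev_proj|exact: ev_drop].
Qed.

Fixpoint Rgn W Wp B g := match g with 0 => B | j.+1 => nextn W Wp j (Rgn W Wp B j) end.
Definition cRg := CPrim (CProj 0) cnext.
Lemma ev_Rg g B W Wp : ev cRg [:: g; B; W; Wp] (Rgn W Wp B g).
Proof.
apply: (@ev_prim _ _ _ _ (Rgn W Wp B)); first exact: ev_proj.
move=> m _; exact: ev_next.
Qed.

Definition progn R' k1 bb i := ((taken k1 (dropn (i * k1) R')).*2 + bb).+1.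
Definition cT := Comp ctake [:: CProj 4; Comp cdrop [:: Comp cmul [:: CProj 0; CProj 4]; CProj 3]].
Definition cprog := Comp CSucc [:: Comp cadd [:: Comp cadd [:: cT; cT]; CProj 5]].
Lemma ev_prog i a O R' k1 bb Pw : ev cprog [:: i; a; O; R'; k1; bb; Pw] (progn R' k1 bb i).
Proof.
have HT : ev cT [:: i; a; O; R'; k1; bb; Pw] (taken k1 (dropn (i * k1) R')).
  apply: ev_comp2; [exact: ev_proj| |exact: ev_take].
  apply: ev_comp2; [|exact: ev_proj|exact: ev_drop].
  apply: ev_comp2; [exact: ev_proj|exact: ev_proj|exact: ev_mul].
apply: ev_comp1; last exact: ev_succ.
apply: ev_comp2; [|exact: ev_proj|exact: ev_add].
apply: ev_comp2; [exact: HT|exact: HT|]. rewrite -addnn; exact: ev_add.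
Qed.

Definition cinner u := CPrim (CProj 0) (Comp cadd [:: Comp u [:: cprog]; Comp cmul [:: CProj 6; CProj 1]]).

Fixpoint innern (y : nat -> nat) Pw O m := match m with 0 => O | i.+1 => y i + Pw * innern y Pw O i end.
Lemma ev_inner u m O R' k1 bb Pw (y : nat -> nat) :
  (forall i, i < m -> ev u [:: progn R' k1 bb i] (y i)) ->
  ev (cinner u) [:: m; O; R'; k1; bb; Pw] (innern y Pw O m).
Proof.
move=> Hy.
apply: (@ev_prim _ _ _ _ (innern y Pw O)); first exact: ev_proj.
move=> i Hi; apply: ev_comp2; last exact: ev_add.
- apply: ev_comp1; [exact: ev_prog|exact: Hy].
- apply: ev_comp2; [exact: ev_proj|exact: ev_proj|exact: ev_mul].
Qed.

Definition couter u := CPrim CZero (Comp (cinner u)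
  [:: Comp csub [:: Comp ctake [:: CProj 3; Comp cRg [:: CProj 0; CProj 2; CProj 3; CProj 4]]; CProj 4];
      CProj 1;
      Comp cdrop [:: CProj 3; Comp cRg [:: CProj 0; CProj 2; CProj 3; CProj 4]];
      Comp cdiv2 [:: CProj 0];
      Comp codd [:: CProj 0];
      CProj 5]).

Lemma ev_outer u (v B W Wp Pw : nat) (s : nat -> nat) :
  s 0 = 0 ->
  (forall g, g < v -> ev (cinner u) [:: taken W (Rgn W Wp B g) - Wp; s g;
          dropn W (Rgn W Wp B g); g./2; nat_of_bool (odd g); Pw] (s g.+1)) ->
  ev (couter u) [:: v; B; W; Wp; Pw] (s v).
Proof.
move=> H0 Hs.
apply: (@ev_prim _ _ _ _ s); first by rewrite H0; exact: ev_zero.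
move=> g Hg.
have HR : ev (Comp cRg [:: CProj 0; CProj 2; CProj 3; CProj 4]) [:: g, s g & [:: B; W; Wp; Pw]] (Rgn W Wp B g).
  apply: ev_comp4; [exact: ev_proj|exact: ev_proj|exact: ev_proj|exact: ev_proj|exact: ev_Rg].
apply: ev_comp; last exact: (Hs g Hg).
split.
  apply: ev_comp2; [|exact: ev_proj|exact: ev_sub].
  apply: ev_comp2; [exact: ev_proj|exact: HR|exact: ev_take].
split; first exact: ev_proj.
split; first by apply: ev_comp2; [exact: ev_proj|exact: HR|exact: ev_drop].
split; first by apply: ev_comp1; [exact: ev_proj|exact: ev_div2].
split; first by apply: ev_comp1; [exact: ev_proj|exact: ev_odd].
split; first exact: ev_proj.
by [].
Qed.

Definition ca1 := Comp cleadF [:: CProj 0].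
Definition cR1 := Comp cdrop [:: Comp CSucc [:: ca1]; CProj 0].
Definition ca2 := Comp cleadF [:: cR1].
Definition cB := Comp cdrop [:: Comp CSucc [:: ca2]; cR1].
Definition cdec u := Comp (couter u) [:: CProj 0; cB; ca2; Comp cpred [:: Comp cpow2 [:: ca2]];
                                       Comp cpow2 [:: ca1]].

Lemma ev_dec u v (s : nat -> nat) :
  let a1 := leadF v in
  let R1 := dropn a1.+1 v in
  let a2 := leadF R1 in
  let B := dropn a2.+1 R1 in
  s 0 = 0 ->
  (forall g, g < v -> ev (cinner u) [:: taken a2 (Rgn a2 (2 ^ a2).-1 B g) - (2 ^ a2).-1; s g;
          dropn a2 (Rgn a2 (2 ^ a2).-1 B g); g./2; nat_of_bool (odd g); 2 ^ a1] (s g.+1)) ->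
  ev (cdec u) [:: v] (s v).
Proof.
move=> a1 R1 a2 B H0 Hs.
have Ha1 : ev ca1 [:: v] a1 by apply: ev_comp1; [exact: ev_proj|exact: ev_leadF].
have HR1 : ev cR1 [:: v] R1.
  apply: ev_comp2; [apply: ev_comp1; [exact: Ha1|exact: ev_succ]|exact: ev_proj|exact: ev_drop].
have Ha2 : ev ca2 [:: v] a2 by apply: ev_comp1; [exact: HR1|exact: ev_leadF].
apply: (@ev_comp _ _ _ [:: v; B; a2; (2 ^ a2).-1; 2 ^ a1]); last exact: (ev_outer H0 Hs).
split; first exact: ev_proj.
split. apply: ev_comp2; [apply: ev_comp1; [exact: Ha2|exact: ev_succ]|exact: HR1|exact: ev_drop].
split; first exact: Ha2.
split. apply: ev_comp1; [apply: ev_comp1; [exact: Ha2|exact: ev_pow2]|exact: ev_pred].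
split. apply: ev_comp1; [exact: Ha1|exact: ev_pow2].
by [].
Qed.


Lemma val_cat s s' : bval (s ++ s') = bval s + 2 ^ size s * bval s'.
Proof.
elim: s => [|b s IH] /=; first by rewrite add0n mul1n.
rewrite IH expnS doubleD -mul2n -mulnA mul2n; lia.
Qed.

Lemma bval_inj : injective bval.
Proof.
elim=> [|b s IH] [|b' s'] //=.
- by case: b'; rewrite addnC.
- by case: b; rewrite addnC.
- move=> H.
  have Hb : b = b'.
    move/(congr1 odd): H; rewrite !oddD !odd_double.
    by case: b; case: b'.
  subst b'; congr (_ :: _); apply: IH.
  move: H; case: (b); rewrite -!muln2; lia.
Qed.

Lemma tailn_val s : tailn (bval s) = bval (behead s).
Proof.
case: s => [|b s] //=; rewrite /tailn.
case: b.
- have -> : ((bval s).*2 + 2).-1 = true + (bval s).*2 by rewrite /=; lia.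
  by rewrite half_bit_double.
- have -> : ((bval s).*2 + 1).-1 = false + (bval s).*2 by rewrite /=; lia.
  by rewrite half_bit_double.
Qed.

Lemma dropn_val j s : dropn j (bval s) = bval (drop j s).
Proof.
elim: j s => [|j IH] s; first by rewrite drop0.
rewrite /dropn iterSr -/(dropn j _) tailn_val IH.
by case: s => [|b s] //=; rewrite drop_nil.
Qed.

Lemma taken_val j s : taken j (bval s) = bval (take j s).
Proof.
rewrite /taken dropn_val -{1}(cat_take_drop j s) val_cat.
case: (leqP j (size s)) => Hj.
  by rewrite size_take_min (minn_idPl Hj) addnK.
by rewrite drop_oversize ?(ltnW Hj) //= !muln0 subn0 addn0.
Qed.

Lemma val_nseq_false j : bval (nseq j false) = (2 ^ j).-1.
Proof.
elim: j => [//|j IH] /=; rewrite IH expnS.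
have := expn_gt0 2 j; case: (2 ^ j) => // x _; rewrite -mul2n /=; lia.
Qed.

Lemma size_le_val s : size s <= bval s.
Proof. elim: s => [//|b s IH] /=; case: b; rewrite -addnn; lia. Qed.

Lemma leadF_val a r : leadF (bval (nseq a false ++ true :: r)) = a.
Proof.
set s := nseq a false ++ true :: r.
have Hs : a < size s by rewrite /s size_cat size_nseq /=; lia.
have Hv : a < bval s by apply: leq_trans Hs (size_le_val _).
rewrite /leadF.
rewrite (eq_bigr (fun j : 'I_(bval s) => nat_of_bool (j < a))); last first.
  move=> j _; rewrite taken_val -val_nseq_false.
  apply/congr1. apply/idP/idP.
  - move/eqP/bval_inj => E; apply: contraTT isT => Hja.
    have : nth false (take j.+1 s) a = true.
      rewrite nth_take; last by rewrite ltnS leqNgt.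
      by rewrite /s nth_cat size_nseq ltnn subnn.
    by rewrite E nth_nseq; case: ifP.
  - move=> Hj; apply/eqP; congr bval.
    by rewrite /s takel_cat ?size_nseq // take_nseq.
rewrite -(big_mkord xpredT (fun j => nat_of_bool (j < a))).
rewrite (big_cat_nat (n:=a)) //= ?(ltnW Hv) //.
rewrite [X in _ + X]big1_seq ?addn0; last first.
  move=> i /andP[_]; rewrite mem_index_iota => /andP[H _]; by rewrite ltnNge H.
rewrite big_mkord (eq_bigr (fun _ => 1)); last by move=> i _; rewrite ltn_ord.
by rewrite sum1_card card_ord.
Qed.

Fixpoint bin W m : seq bool := match W with 0 => [::] | W'.+1 => odd m :: bin W' m./2 end.
Lemma size_bin W m : size (bin W m) = W.
Proof. by elim: W m => [|W IH] m //=; rewrite IH. Qed.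
Lemma val_bin W m : m < 2 ^ W -> bval (bin W m) = (2 ^ W).-1 + m.
Proof.
elim: W m => [|W IH] m /=; first by rewrite expn0; case: m.
move=> Hm; rewrite IH; last by rewrite ltn_half_double -mul2n -expnS.
have := odd_double_half m; have := expn_gt0 2 W; rewrite expnS.
move: (m./2) (2 ^ W) => h x; case: (odd m) => /=; rewrite -!muln2; lia.
Qed.

Definition grp t (key : 'I_t -> nat) g := [seq i <- enum 'I_t | key i == g].
Definition blk t key (q : 'I_t -> seq bool) W g :=
  bin W (size (@grp t key g)) ++ flatten [seq behead (q i) | i <- grp key g].
Definition Bs t key q W G g := flatten [seq @blk t key q W j | j <- iota g (G - g)].

Lemma Bs_cons t key q W G g : g < G -> @Bs t key q W G g = blk key q W g ++ Bs key q W G g.+1.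
Proof. by move=> Hg; rewrite /Bs -(subnSK Hg). Qed.
Lemma Bs_nil t key q W G g : G <= g -> @Bs t key q W G g = [::].
Proof. by move=> Hg; rewrite /Bs (eqP Hg). Qed.

Lemma size_grp t key g : size (@grp t key g) <= t.
Proof. by rewrite /grp size_filter (leq_trans (count_size _ _)) // size_enum_ord. Qed.

Lemma drop_flatten_k (T : Type) k (ls : seq (seq T)) r i :
  all (fun l => size l == k) ls -> i <= size ls ->
  drop (i * k) (flatten ls ++ r) = flatten (drop i ls) ++ r.
Proof.
elim: ls i => [|l ls IH] [|i] //=; rewrite ?mul0n ?drop0 // => /andP[/eqP Hl Hs] Hi.
by rewrite -catA mulSn drop_cat Hl ltnNge leq_addr /= addKn IH.
Qed.

Lemma Rgn_spec t key q W G (Hsz : forall i, size (behead (q i)) = (key i)./2) (HW : t < 2 ^ W) g :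
  Rgn W (2 ^ W).-1 (bval (@Bs t key q W G 0)) g = bval (Bs key q W G g).
Proof.
elim: g => [//|g IH] /=; rewrite IH /nextn.
case: (ltnP g G) => Hg.
  rewrite (Bs_cons _ _ _ Hg) /blk -catA taken_val dropn_val take_size_cat ?size_bin //.
  rewrite val_bin ?(leq_ltn_trans (size_grp _ _) HW) // addKn drop_size_cat ?size_bin //.
  rewrite dropn_val.
  have -> : size (grp key g) * g./2 = size (flatten [seq behead (q i) | i <- grp key g]).
    rewrite size_flatten /shape -map_comp.
    rewrite (eq_in_map _ (fun _ => g./2) _).1; last first.
      by move=> i; rewrite mem_filter => /andP[/eqP <- _] /=; rewrite Hsz.
    have -> : [seq g./2 | _ <- grp key g] = nseq (size (grp key g)) g./2.
      by elim: (grp key g) => //= ? ? ->.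
    by rewrite sumn_nseq mulnC.
  by rewrite drop_size_cat.
rewrite !Bs_nil // ?(leq_trans Hg) //.
by rewrite /= /taken /dropn iter_fix //.
Qed.

Lemma innern_spec n (ys : seq (seq bool)) (O : seq bool) m :
  all (fun y => size y == n) ys -> m <= size ys ->
  innern (fun i => bval (nth [::] ys i)) (2 ^ n) (bval O) m = bval (flatten (rev (take m ys)) ++ O).
Proof.
move=> Hall; elim: m => [|m IH] Hm /=; first by rewrite take0.
rewrite IH ?(ltnW Hm) // (take_nth [::] Hm) rev_rcons /= -catA [in RHS]val_cat.
by have /all_nthP := Hall => /(_ [::] m Hm) /eqP ->.
Qed.

Lemma val_cons b s : bval (b :: s) = ((bval s).*2 + b).+1.
Proof. by case: b => /=; lia. Qed.

Definition enc t key q n W G :=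
  nseq n false ++ true :: (nseq W false ++ true :: @Bs t key q W G 0).

Lemma size_Bs_ge t key q W g m : m * W <= size (flatten [seq @blk t key q W j | j <- iota g m]).
Proof.
elim: m g => [//|m IH] g /=.
rewrite size_cat mulSn leq_add // /blk size_cat size_bin leq_addr //.
Qed.

Definition sout t key (xs : 'I_t -> seq bool) G g :=
  bval (flatten [seq xs i | i <- rev (flatten [seq @grp t key j | j <- iota 0 (minn g G)])]).

Lemma dec_correct u t n W G key q (xs : 'I_t -> seq bool)
  (Hsz : forall i, size (behead (q i)) = (key i)./2)
  (Hhd : forall i, q i = odd (key i) :: behead (q i))
  (HW : t < 2 ^ W) (W0 : 0 < W)
  (Hx : forall i, size (xs i) = n)
  (Hu : forall i, ev u [:: bval (q i)] (bval (xs i))) :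
  ev (cdec u) [:: bval (enc key q n W G)]
     (bval (flatten [seq xs i | i <- rev (flatten [seq grp key g | g <- iota 0 G])])).
Proof.
set p := enc key q n W G.
have Hlen : G <= bval p.
  apply: leq_trans (size_le_val _).
  rewrite /p /enc /= size_cat /= size_cat /= /Bs subn0.
  apply: leq_trans (leq_addl _ _); apply: leq_trans (leqnSn _); apply: leq_trans (leq_addl _ _).
  apply: leq_trans (leqnSn _); apply: leq_trans (size_Bs_ge key q W 0 G).
  by rewrite -{1}(muln1 G) leq_mul2l W0 orbT.
have Hfin : sout key xs G (bval p) = bval (flatten [seq xs i | i <- rev (flatten [seq grp key g | g <- iota 0 G])]).
  by rewrite /sout (minn_idPr Hlen).
rewrite -Hfin.
have Ha1 : leadF (bval p) = n by rewrite /p /enc leadF_val.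
have HR1 : dropn n.+1 (bval p) = bval (nseq W false ++ true :: Bs key q W G 0).
  by rewrite dropn_val /p /enc -cat_rcons drop_size_cat // size_rcons size_nseq.
have Ha2 : leadF (bval (nseq W false ++ true :: Bs key q W G 0)) = W by rewrite leadF_val.
have HB : dropn W.+1 (bval (nseq W false ++ true :: Bs key q W G 0)) = bval (Bs key q W G 0).
  by rewrite dropn_val -cat_rcons drop_size_cat // size_rcons size_nseq.
have := @ev_dec u (bval p) (sout key xs G).
cbv zeta; rewrite Ha1 HR1 Ha2 HB; apply.
  by rewrite /sout min0n.
move=> g _.
rewrite Rgn_spec //.
case: (ltnP g G) => Hg; last first.
  rewrite Bs_nil //= /taken /dropn iter_fix //.
  have -> : sout key xs G g.+1 = innern (fun _ => 0) (2 ^ n) (sout key xs G g) 0.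
    by rewrite /= /sout (minn_idPr Hg) (minn_idPr (leq_trans Hg (leqnSn _))).
  by apply: ev_inner.
rewrite (Bs_cons _ _ _ Hg) /blk -catA taken_val dropn_val take_size_cat ?size_bin //.
rewrite val_bin ?(leq_ltn_trans (size_grp _ _) HW) // addKn drop_size_cat ?size_bin //.
set l := grp key g.
set ys := [seq xs i | i <- l].
have Hall : all (fun y => size y == n) ys.
  by apply/allP => y /mapP[i _ ->]; rewrite Hx.
have -> : sout key xs G g.+1 = innern (fun i => bval (nth [::] ys i)) (2 ^ n) (sout key xs G g) (size l).
  rewrite /sout innern_spec ?size_map // take_oversize ?size_map // (minn_idPl Hg) (minn_idPl (ltnW Hg)).
  rewrite -addn1 iotaD /= map_cat flatten_cat /= cats0 rev_cat map_cat flatten_cat.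
  by rewrite /ys map_rev.
apply: ev_inner => i Hi.
have x0 : 'I_t by apply: (Ordinal (leq_trans Hi (size_grp key g))).
set tl := [seq behead (q j) | j <- l].
have Htl : all (fun l0 => size l0 == g./2) tl.
  apply/allP => y /mapP[j]; rewrite mem_filter => /andP[/eqP Hj _] ->.
  by rewrite Hsz Hj.
rewrite /progn dropn_val taken_val drop_flatten_k //; last by rewrite size_map ltnW.
rewrite (drop_nth [::]) ?size_map // /= -catA take_size_cat; last first.
  by have /all_nthP := Htl => /(_ [::] i); rewrite size_map => /(_ Hi) /eqP.
rewrite -val_cons /tl (nth_map x0) // /ys (nth_map x0) //.
have Hkey : key (nth x0 l i) = g.
  by have := mem_nth x0 Hi; rewrite mem_filter => /andP[/eqP].
by rewrite -{1}Hkey -Hhd.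
Qed.

Lemma grpL_spec t (key : 'I_t -> nat) m :
  uniq (flatten [seq grp key j | j <- iota 0 m]) /\
  forall i, (i \in flatten [seq grp key j | j <- iota 0 m]) = (key i < m).
Proof.
elim: m => [|m [IHu IHm]]; first by split => // i; rewrite ltn0.
rewrite -addn1 iotaD /= map_cat flatten_cat /= cats0.
split.
  rewrite cat_uniq IHu filter_uniq ?enum_uniq // andbT /=.
  apply/hasPn => i; rewrite mem_filter => /andP[/eqP Hi _].
  by rewrite IHm Hi ltnn.
by move=> i; rewrite mem_cat IHm mem_filter mem_enum andbT add0n addn1 ltnS [RHS]leq_eqVlt orbC.
Qed.

Lemma grpL_perm t (key : 'I_t -> nat) G : (forall i, key i < G) ->
  perm_eq (flatten [seq grp key j | j <- iota 0 G]) (enum 'I_t).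
Proof.
move=> HG; have [Hu Hm] := grpL_spec key G.
apply: uniq_perm => // [|i]; first exact: enum_uniq.
by rewrite Hm HG mem_enum.
Qed.

Lemma perm_of_seq t (s : seq 'I_t) : perm_eq s (enum 'I_t) ->
  exists pi : 'S_t, [seq pi i | i <- enum 'I_t] = s.
Proof.
case: t s => [|t] s Hp.
  exists (1%g : 'S_0); have := perm_size Hp; rewrite size_enum_ord.
  by case: s {Hp} => // _; rewrite enum_ord0.
have Hsz : size s = t.+1 by rewrite (perm_size Hp) size_enum_ord.
have Hu : uniq s by rewrite (perm_uniq Hp) enum_uniq.
pose f := fun j : 'I_t.+1 => nth j s j.
have finj : injective f.
  move=> j1 j2; rewrite /f => E.
  apply/val_inj/eqP.
  rewrite -(nth_uniq j1 _ _ Hu) ?Hsz ?ltn_ord //.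
  by rewrite E (set_nth_default j2) // Hsz ltn_ord.
exists (perm finj).
apply: (@eq_from_nth _ ord0) => [|j]; first by rewrite size_map size_enum_ord Hsz.
rewrite size_map size_enum_ord => Hj.
rewrite (nth_map ord0) ?size_enum_ord // permE /f (nth_enum_ord _ Hj).
by apply: set_nth_default; rewrite Hsz.
Qed.

Lemma size_flattenE (T : Type) (ss : seq (seq T)) : size (flatten ss) = \sum_(s <- ss) size s.
Proof. by rewrite size_flatten /shape sumnE big_map. Qed.

Lemma size_enc t key q n W G : (forall i, key i < G) ->
  size (@enc t key q n W G) = n + W + 2 + G * W + \sum_(i < t) size (behead (q i)).
Proof.
move=> HG.
rewrite /enc size_cat size_nseq /= size_cat size_nseq /= /Bs subn0 size_flattenE big_map.
rewrite (eq_bigr (fun j => W + \sum_(i <- grp key j) size (behead (q i)))); last first.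
  by move=> j _; rewrite /blk size_cat size_bin size_flattenE big_map.
rewrite big_split /=.
have -> : \sum_(i <- iota 0 G) W = G * W by rewrite big_const_seq count_predT size_iota iter_addn_0 mulnC.
rewrite -(big_map (fun j => grp key j) xpredT (fun l => \sum_(i <- l) size (behead (q i)))).
rewrite -big_flatten /= (perm_big _ (grpL_perm HG)) /= big_enum /=.
rewrite (eq_bigl (fun _ => true)) //; lia.
Qed.

Lemma sq_le_pow W : 4 <= W -> W * W <= 2 ^ W.
Proof.
elim: W => [//|W IH] HW.
case: (ltngtP W 4) => H; first by have -> : W = 3 by lia.
  have := IH (ltnW H); rewrite expnS; nia.
by subst W.
Qed.

Lemma final_nat t a D B : 0 < t -> t <= a + D + B * (trunc_log 2 t).+1 ->
  t <= 2 * (a + D) + 4 * B * B.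
Proof.
move=> Ht; set W := (trunc_log 2 t).+1.
have HW : 2 ^ W <= 2 * t by rewrite expnS leq_mul2l /= trunc_logP.
case: (leqP W (4 * B)) => H1 H2.
  have : B * W <= B * (4 * B) by rewrite leq_mul2l H1 orbT.
  lia.
case: B H1 H2 => [|B] H1 H2; first by lia.
have H4 : 4 <= W by lia.
have := sq_le_pow H4.
nia.
Qed.

Lemma least_ex (Q : nat -> Prop) : (exists m, Q m) -> exists m, Q m /\ forall j, Q j -> m <= j.
Proof.
move=> [m Hm]; elim: m {-2}m (leqnn m) Hm => [|M IH] m Hm HQ.
  by exists m; split => // j _; move: Hm; rewrite leqn0 => /eqP ->.
case: (classic (exists j, j < m /\ Q j)) => [[j [Hj HQj]]|Hn].
  by apply: (IH j) => //; lia.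
exists m; split => // j HQj; rewrite leqNgt; apply/negP => Hj; apply: Hn; by exists j.
Qed.

Lemma desc_id x : desc (CProj 0) x x.
Proof. by exists 1. Qed.

Lemma KC_spec u : universal u -> forall x,
  (exists p, size p = KC u x /\ desc u p x) /\ (forall p, desc u p x -> KC u x <= size p).
Proof.
move=> Hu x.
have [c Hc] := Hu (CProj 0).
have [q [Hq _]] := Hc x x (desc_id x).
have [m [[p [Hp Hd]] Hmin]] := @least_ex (fun m => exists p, size p = m /\ desc u p x) (ex_intro _ (size q) (ex_intro _ q (conj erefl Hq))).
have Hex : exists m, (exists p, size p = m /\ desc u p x) /\ (forall p, desc u p x -> m <= size p).
  exists m; split; first by exists p.
  by move=> p' Hp'; apply: Hmin; exists p'.
exact: (epsilon_spec (inhabits 0) _ Hex).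
Qed.

Lemma KC_le u : universal u -> exists c0, forall x, KC u x <= size x + c0.
Proof.
move=> Hu; have [c Hc] := Hu (CProj 0); exists c => x.
have [q [Hq Hs]] := Hc x x (desc_id x).
have [_ Hm] := KC_spec Hu x.
exact: leq_trans (Hm _ Hq) Hs.
Qed.

Lemma desc_det u p x y : desc u p x -> desc u p y -> x = y.
Proof. by move=> H1 H2; apply: bval_inj; apply: (ev_det H1 H2). Qed.

Lemma KC_pos u : universal u -> exists N, forall x, N <= size x -> 0 < KC u x.
Proof.
move=> Hu.
case: (classic (exists y, desc u [::] y)) => [[y Hy]|Hn].
  exists (size y).+1 => x Hx; rewrite lt0n; apply/negP => /eqP H0.
  have [[p [Hp Hd]] _] := KC_spec Hu x.
  move: Hp; rewrite H0 => /size0nil Hp; subst p.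
  by move: Hx; rewrite (desc_det Hd Hy) ltnn.
exists 0 => x _; rewrite lt0n; apply/negP => /eqP H0.
have [[p [Hp Hd]] _] := KC_spec Hu x.
move: Hp; rewrite H0 => /size0nil Hp; subst p.
by apply: Hn; exists x.
Qed.

Lemma core u : universal u -> exists c0 cD N, forall n, N <= n ->
  forall (a t : nat) (xs : 'I_t -> seq bool), (forall i, size (xs i) = n) ->
  mutually_indep u (Posz a) xs -> t <= 2 * (a + (n + 2 + cD)) + 4 * (2 * (n + c0)).+1 * (2 * (n + c0)).+1.
Proof.
move=> Hu.
have [c0 Hc0] := KC_le Hu.
have [cD HcD] := Hu (cdec u).
have [N HN] := KC_pos Hu.
exists c0, cD, N => n Hn a t xs Hx Hind.
case: (posnP t) => [->|Ht]; first by [].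
pose q i := epsilon (inhabits [::]) (fun p => size p = KC u (xs i) /\ desc u p (xs i)).
have Hq : forall i, size (q i) = KC u (xs i) /\ desc u (q i) (xs i).
  move=> i; exact: (epsilon_spec (inhabits [::]) (fun p => size p = KC u (xs i) /\ desc u p (xs i)) ((KC_spec Hu (xs i)).1)).
have Hq1 : forall i, 0 < size (q i).
  by move=> i; rewrite (Hq i).1 HN // Hx.
pose key i := head false (q i) + ((size (q i)).-1).*2.
pose G := 2 * (n + c0).
pose W := (trunc_log 2 t).+1.
have Hsz : forall i, size (behead (q i)) = (key i)./2.
  by move=> i; rewrite /key half_bit_double size_behead.
have Hhd : forall i, q i = odd (key i) :: behead (q i).
  move=> i; have := Hq1 i; rewrite /key oddD odd_double addbF.
  by rewrite oddb; case: (q i).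
have HG : forall i, key i < G.
  move=> i; have := Hc0 (xs i); rewrite -(Hq i).1 Hx /key /G.
  have := Hq1 i; case: (head false (q i)) => /=; lia.
have HW : t < 2 ^ W by apply: trunc_log_ltn.
have Hdec := @dec_correct u t n W G key q xs Hsz Hhd HW (ltn0Sn _) Hx (fun i => (Hq i).2).
have [qq [Hqq Hsq]] := HcD _ _ Hdec.
have Hout := (KC_spec Hu _).2 _ Hqq.
set L := flatten [seq grp key g | g <- iota 0 G] in Hdec Hout.
have [pi Hpi] : exists pi : 'S_t, [seq pi i | i <- enum 'I_t] = rev L.
  by apply: perm_of_seq; rewrite perm_rev; apply: grpL_perm.
have Hcp : concat_perm xs pi = flatten [seq xs i | i <- rev L].
  by rewrite /concat_perm -Hpi; elim: (enum 'I_t) => //= ? ? ->.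
have := Hind pi; rewrite Hcp.
rewrite -(big_morph (@Posz) PoszD erefl).
have Hsum : \sum_(i < t) KC u (xs i) = \sum_(i < t) size (behead (q i)) + t.
  rewrite -[X in _ + X](card_ord t) -sum1_card -big_split /=.
  by apply: eq_bigr => i _; rewrite size_behead -(Hq i).1 addn1 prednK.
rewrite Hsum.
have := @size_enc t key q n W G HG.
move: Hout Hsq.
set S1 := \sum_(i < t) size (behead (q i)).
set K := KC u _.
move=> Hout Hsq Henc Hint.
have Hle : t <= a + (n + 2 + cD) + G.+1 * W.
  have : (S1 + t <= K + a)%N.
    move: Hint; lia.
  lia.
exact: final_nat Ht Hle.
Qed.

Lemma alpha_pos (n : nat) (alpha : int) : (2 <= n)%N ->
  (7 * (ln (n%:R) / ln 2) + 6 < alpha%:~R)%R -> exists a : nat, alpha = Posz a.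
Proof.
move=> Hn H.
have Hl : (0 < ln (n%:R))%R.
  have E : (GRing.zero : R) = ln 1 by rewrite ln_1.
  apply/RltP; rewrite E; apply: ln_increasing; first exact: Rlt_0_1.
  by apply/RltP; rewrite ltr1n.
have H2 : (0 < ln 2)%R.
  apply/RltP; apply: Rlt_trans (ln_lt_2); apply: Rinv_0_lt_compat; exact: Rlt_0_2.
have : ((0 : int)%:~R < alpha%:~R :> R)%R.
  apply: le_lt_trans H; rewrite mulr0z.
  by apply: addr_ge0 => //; apply: mulr_ge0 => //; apply: divr_ge0; apply: ltW.
rewrite ltr_int; clear H; case: alpha => [a|a] // _; by exists a.
Qed.

Lemma bound_nat t a n c0 cD :
  (t <= 2 * (a + (n + 2 + cD)) + 4 * (2 * (n + c0)).+1 * (2 * (n + c0)).+1)%N ->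
  (t <= (16 * (c0 + 1) ^ 2 + 2 * cD + 6) * (n + 1) ^ 2 * 2 ^ a)%N.
Proof.
move=> Ht.
have Hae : (a <= 2 ^ a)%N by apply: ltnW; apply: ltn_expl.
have He : (1 <= 2 ^ a)%N by rewrite expn_gt0.
move: (2 ^ a) Hae He => e Hae He.
set X := (2 * (n + c0)).+1 in Ht *.
set Y := (n + 2 + cD) in Ht *.
have HX : (X <= 2 * (c0 + 1) * (n + 1))%N.
  rewrite /X; nia.
have HXX : (4 * X * X <= 16 * (c0 + 1) ^ 2 * (n + 1) ^ 2)%N.
  have := leq_mul HX HX.
  have -> : (2 * (c0 + 1) * (n + 1) * (2 * (c0 + 1) * (n + 1)) = 4 * ((c0 + 1) ^ 2 * (n + 1) ^ 2))%N.
    rewrite !expnS !expn0 !muln1; move: (c0 + 1) (n + 1) => A B; ring.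
  have -> : (16 * (c0 + 1) ^ 2 * (n + 1) ^ 2 = 4 * (4 * ((c0 + 1) ^ 2 * (n + 1) ^ 2)))%N.
    by rewrite !mulnA.
  by rewrite -mulnA leq_mul2l.
have Hm : (n + 1 <= (n + 1) ^ 2)%N by rewrite expnS expn1 leq_pmulr ?addn1.
have HY : (2 + 2 * Y <= (2 * cD + 6) * (n + 1) ^ 2)%N.
  move: ((n + 1) ^ 2) Hm => m Hm; rewrite /Y; nia.
have H1 : (t <= (2 + 2 * Y + 4 * X * X) * e)%N.
  apply: (leq_trans Ht); rewrite !mulnDl.
  have : (2 * Y + 4 * X * X <= (2 * Y + 4 * X * X) * e)%N by rewrite leq_pmulr.
  rewrite mulnDl; lia.
apply: (leq_trans H1); rewrite leq_mul2r; apply/orP; right.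
rewrite !mulnDl; lia.
Qed.

Theorem theorem7 :
  forall u : code, universal u ->
  exists P : {poly R}, exists N : nat, forall n : nat, (N <= n)%N ->
    forall (alpha : int) (t : nat) (xs : 'I_t -> seq bool),
      (7 * (ln (n%:R) / ln 2) + 6 < alpha%:~R)%R ->
      (forall i, size (xs i) = n) ->
      mutually_indep u alpha xs ->
      (t%:R <= P.[n%:R] * (2%:R : R) ^ alpha)%R.
Proof.
move=> u Hu.
have [c0 [cD [N Hcore]]] := core Hu.
pose C := (16 * (c0 + 1) ^ 2 + 2 * cD + 6)%N.
exists ((C%:R)%:P * ('X + 1) ^+ 2)%R, (maxn N 2) => n Hn alpha t xs Hal Hsz Hind.
have [a Ha] := @alpha_pos n alpha (leq_trans (leq_maxr _ _) Hn) Hal; subst alpha.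
have Ht := Hcore n (leq_trans (leq_maxl _ _) Hn) a t xs Hsz Hind.
rewrite -exprnP hornerM hornerC horner_exp hornerD hornerX hornerC.
apply: (@le_trans _ _ (((C * (n + 1) ^ 2 * 2 ^ a)%N)%:R)%R).
  by rewrite ler_nat; exact: bound_nat.
by rewrite !natrM !natrX natrD.
Qed.
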